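(* Let $\{\Phi^{(n)}\}_{n\ge1}$ be a sequence of finite crystallographic root systems of ranks $r_n$ and $\{d_n\}_{n\ge1}$ a sequence of positive integers such that $|\Phi^{(n),+}_{\le d_n}|\to\infty$ and for every $n$ there is a positive root of $\Phi^{(n)}$ of height $d_n$. Let $\delta_n$ be the maximal vertex degree of the graph with vertex set $\Phi^{(n),+}_{\le d_n}$ and an edge between distinct $\beta,\gamma$ whenever $\mathcal{X}_\beta$ and $\mathcal{X}_\gamma$ are dependent (equivalently, $\beta,\gamma$ are not orthogonal). Then there exist constants $C,C'>0$ and $N$ such that for all $n\ge N$, \[ |\Phi^{(n),+}_{\le d_n}|\le C\, r_n d_n \quad\text{and}\quad \delta_n\le C'\, d_n. \]
   Context: For a finite crystallographic root system $\Phi$ with simple roots $\Delta$ and positive roots $\Phi^+$, the rank is $|\Delta|$, the height of $\beta=\sum_{\alpha\in\Delta}\lambda_\alpha\alpha\in\Phi^+$ is $\sum_\alpha\lambda_\alpha$, and $\Phi^+_{\le d}$ is the set of positive roots of height at most $d$. $W$ is the Weyl group. For $\beta\in\Phi^+$, $\mathcal{X}_\beta$ is the Bernoulli random variable on $W$ (uniform) with $\mathcal{X}_\beta(w)=1$ if $w(\beta)\in-\Phi^+$ and $0$ otherwise. *)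

(* Defs.v *)
From mathcomp Require Import all_boot all_order all_algebra all_fingroup.
From mathcomp Require Import boolp reals.
Set Implicit Arguments. Unset Strict Implicit. Unset Printing Implicit Defensive.
Import Order.TTheory GRing.Theory Num.Theory.
Local Open Scope ring_scope.

Section RootSystems.
Variable R : realType.

Definition dotv (r : nat) (u v : 'rV[R]_r) : R := (u *m v^T) 0 0.

Definition reflv (r : nat) (a b : 'rV[R]_r) : 'rV[R]_r :=
  b - ((2 * dotv b a) / dotv a a) *: a.

Variables (m r : nat).
(* A finite root system is given by an injective enumeration of its roots *)
Variable phi : 'I_m -> 'rV[R]_r.

Definition is_root_system : Prop :=
  injective phi /\
  (forall i, phi i != 0) /\
  \rank (\matrix_(i < m) phi i) = r /\
  (forall i j, exists k, phi k = reflv (phi i) (phi j)) /\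
  (forall i j, exists z : int, (2 * dotv (phi j) (phi i)) / dotv (phi i) (phi i) = z%:~R) /\
  (forall i j (c : R), phi j = c *: phi i -> phi j = phi i \/ phi j = - phi i).

Variable D : {set 'I_m}.

Definition is_base : Prop :=
  (forall c : 'I_m -> R, \sum_(i in D) c i *: phi i = 0 -> forall i, i \in D -> c i = 0)
  /\ (forall j, exists c : 'I_m -> nat,
        phi j = \sum_(i in D) (c i)%:R *: phi i \/
        phi j = - \sum_(i in D) (c i)%:R *: phi i).

Definition pos_height (j : 'I_m) (h : nat) : Prop :=
  exists c : 'I_m -> nat,
    phi j = \sum_(i in D) (c i)%:R *: phi i /\ (\sum_(i in D) c i)%N = h.

Definition is_neg (j : 'I_m) : Prop :=
  exists c : 'I_m -> nat,
    phi j = - \sum_(i in D) (c i)%:R *: phi i /\ (0 < \sum_(i in D) c i)%N.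

Definition pos_le (d : nat) : {set 'I_m} :=
  [set j | `[< exists h, (h <= d)%N /\ pos_height j h >]].

(* Weyl group, realized faithfully as a group of permutations of the roots,
   generated by the reflections s_alpha *)
Definition refl_perms : {set {perm 'I_m}} :=
  [set s : {perm 'I_m} | [exists i, [forall j, phi (s j) == reflv (phi i) (phi j)]]].

Definition weyl : {set {perm 'I_m}} := <<refl_perms>>%g.

Definition X (b : 'I_m) (w : {perm 'I_m}) : bool := `[< is_neg (w b) >].

(* X_b and X_g are independent under the uniform distribution on W *)
Definition indepX (b g : 'I_m) : bool :=
  [forall x : bool, forall y : bool,
     #|weyl| * #|[set w in weyl | (X b w == x) && (X g w == y)]|
     == #|[set w in weyl | X b w == x]| * #|[set w in weyl | X g w == y]|]%N.

Definition dep_degree (d : nat) (b : 'I_m) : nat :=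
  #|[set g in pos_le d | (g != b) && ~~ indepX b g]|.

Definition max_dep_degree (d : nat) : nat :=
  (\max_(b in pos_le d) dep_degree d b)%N.

End RootSystems.

(* Main.v *)
Require Import Defs.
From mathcomp Require Import all_boot all_order all_algebra all_fingroup.
From mathcomp Require Import boolp reals.
From mathcomp Require Import ring lra zify.
Import Order.TTheory GRing.Theory Num.Theory.
Local Open Scope ring_scope.

Section Dot.
Set Implicit Arguments. Unset Strict Implicit.
Variables (R : realType) (r : nat).
Implicit Types u v w : 'rV[R]_r.
Local Notation dot := (@dotv R r).

Lemma dotE u v : dot u v = \sum_i u 0 i * v 0 i.
Proof. by rewrite /dotv mxE; apply: eq_bigr => i _; rewrite mxE. Qed.

Lemma dotC u v : dot u v = dot v u.
Proof. by rewrite !dotE; apply: eq_bigr => i _; rewrite mulrC. Qed.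

Lemma dotDl u v w : dot (u + v) w = dot u w + dot v w.
Proof. by rewrite !dotE -big_split; apply: eq_bigr => i _; rewrite mxE mulrDl. Qed.

Lemma dotZl a u v : dot (a *: u) v = a * dot u v.
Proof. by rewrite !dotE mulr_sumr; apply: eq_bigr => i _; rewrite mxE mulrA. Qed.

Lemma dotNl u v : dot (- u) v = - dot u v.
Proof. by rewrite -scaleN1r dotZl mulN1r. Qed.

Lemma dotBl u v w : dot (u - v) w = dot u w - dot v w.
Proof. by rewrite dotDl dotNl. Qed.

Lemma dotDr u v w : dot w (u + v) = dot w u + dot w v.
Proof. by rewrite dotC dotDl !(dotC w). Qed.
Lemma dotZr a u v : dot v (a *: u) = a * dot v u.
Proof. by rewrite dotC dotZl dotC. Qed.
Lemma dotNr u v : dot v (- u) = - dot v u.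
Proof. by rewrite dotC dotNl dotC. Qed.
Lemma dotBr u v w : dot w (u - v) = dot w u - dot w v.
Proof. by rewrite dotDr dotNr. Qed.

Lemma dot0l v : dot 0 v = 0.
Proof. by rewrite -(scale0r 0) dotZl mul0r. Qed.

Lemma dot_suml (I : finType) (P : pred I) (F : I -> 'rV[R]_r) v :
  dot (\sum_(i | P i) F i) v = \sum_(i | P i) dot (F i) v.
Proof.
elim/big_rec2: _ => [|i x y _ <-]; first by rewrite dot0l.
by rewrite dotDl.
Qed.

Lemma dot_sumr (I : finType) (P : pred I) (F : I -> 'rV[R]_r) v :
  dot v (\sum_(i | P i) F i) = \sum_(i | P i) dot v (F i).
Proof. by rewrite dotC dot_suml; apply: eq_bigr => i _; rewrite dotC. Qed.

Lemma dot_ge0 u : 0 <= dot u u.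
Proof. by rewrite dotE sumr_ge0 // => i _; rewrite -expr2 sqr_ge0. Qed.

Lemma dot_eq0 u : dot u u = 0 -> u = 0.
Proof.
rewrite dotE => /eqP; rewrite psumr_eq0 => [/allP H|i _]; last by rewrite -expr2 sqr_ge0.
apply/rowP => i; rewrite mxE; have := H i (mem_index_enum _).
by rewrite implyTb mulf_eq0 orbb => /eqP.
Qed.

Lemma dot_gt0 u : u != 0 -> 0 < dot u u.
Proof. by move=> u0; rewrite lt_def dot_ge0 andbT; apply: contra u0 => /eqP/dot_eq0 ->. Qed.

End Dot.

Section Roots.
Set Implicit Arguments. Unset Strict Implicit.
Variables (R : realType) (m r : nat) (phi : 'I_m -> 'rV[R]_r) (D : {set 'I_m}).
Hypothesis hR : is_root_system phi.
Hypothesis hB : is_base phi D.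
Local Notation dot := (@dotv R r).

Lemma phi_inj : injective phi. Proof. by case: hR. Qed.
Lemma phi_neq0 i : phi i != 0. Proof. by case: hR => _ []. Qed.
Lemma refl_ex i j : exists k, phi k = reflv (phi i) (phi j).
Proof. by case: hR => _ [_ [_ []]]. Qed.
Lemma integ i j : exists z : int, (2 * dot (phi j) (phi i)) / dot (phi i) (phi i) = z%:~R.
Proof. by case: hR => _ [_ [_ [_ []]]]. Qed.

Lemma indepD (c : 'I_m -> R) : \sum_(i in D) c i *: phi i = 0 -> forall i, i \in D -> c i = 0.
Proof. by case: hB => H _; apply: H. Qed.

Lemma coefs_eq (a b : 'I_m -> R) :
  \sum_(i in D) a i *: phi i = \sum_(i in D) b i *: phi i -> forall i, i \in D -> a i = b i.
Proof.
move=> E i iD; apply/eqP; rewrite -subr_eq0; apply/eqP; move: i iD; apply: indepD.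
under eq_bigr do rewrite scalerBl.
by rewrite sumrB E subrr.
Qed.

Lemma sumD0 (c : 'I_m -> nat) : \sum_(i in D) (c i)%:R = 0 :> R ->
  \sum_(i in D) (c i)%:R *: phi i = 0.
Proof.
rewrite -natr_sum => /eqP; rewrite pnatr_eq0 sum_nat_eq0 => /forallP H.
apply: big1 => i iD; have := H i; rewrite iD /= => /eqP ->; by rewrite scale0r.
Qed.

Lemma noroot (k : 'I_m) (a : 'I_m -> R) : \sum_(i in D) a i = 0 ->
  phi k = \sum_(i in D) a i *: phi i -> False.
Proof.
move=> S E; case: hB => _ /(_ k) [c [Hc|Hc]].
- have H := coefs_eq (etrans (esym E) Hc).
  have : \sum_(i in D) (c i)%:R = 0 :> R.
    by rewrite -[RHS]S; apply: eq_bigr => i iD; rewrite H.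
  move/sumD0; rewrite -Hc => H0; by move: (phi_neq0 k); rewrite H0 eqxx.
- have : \sum_(i in D) (- (c i)%:R) *: phi i = \sum_(i in D) a i *: phi i.
    by rewrite -E Hc -sumrN; apply: eq_bigr => i _; rewrite scaleNr.
  move/coefs_eq => H.
  have : \sum_(i in D) (c i)%:R = 0 :> R.
    by apply/eqP; rewrite -oppr_eq0 -sumrN -[X in _ == X]S; apply/eqP; apply: eq_bigr => i iD; rewrite H.
  move/sumD0 => H0; move: (phi_neq0 k); by rewrite Hc H0 oppr0 eqxx.
Qed.

Lemma pos_height0 j : ~ pos_height phi D j 0.
Proof.
case=> c [Hc Hs]; apply: (@noroot j (fun i => (c i)%:R)) => //.
by rewrite -natr_sum Hs.
Qed.

Lemma diff_noroot i j h k : pos_height phi D i h -> pos_height phi D j h ->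
  phi k = phi i - phi j -> False.
Proof.
case=> ci [Hi Si] [cj [Hj Sj]] E.
apply: (@noroot k (fun l => (ci l)%:R - (cj l)%:R)).
  by rewrite sumrB -!natr_sum Si Sj subrr.
by rewrite E Hi Hj -sumrB; apply: eq_bigr => l _; rewrite scalerBl.
Qed.

Lemma int_ge1 (z : int) (q : R) : q = z%:~R -> 0 < q -> (z = 1 \/ 2 <= q).
Proof.
move=> -> ; rewrite ltr0z => z0.
have [->|z1] := eqVneq z 1; first by left.
right; have : (2 <= z)%R by lia.
by rewrite -(ler_int R).
Qed.

Lemma key i j : i != j -> 0 < dot (phi i) (phi j) ->
  exists k, phi k = phi i - phi j \/ phi k = phi j - phi i.
Proof.
move=> ij p0.
have a0 := dot_gt0 (phi_neq0 i); have b0 := dot_gt0 (phi_neq0 j).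
have [z1 E1] := integ j i; have [z2 E2] := integ i j.
rewrite (dotC (phi j)) in E2.
have q10 : 0 < 2 * dot (phi i) (phi j) / dot (phi j) (phi j).
  by rewrite divr_gt0 // mulr_gt0.
have q20 : 0 < 2 * dot (phi i) (phi j) / dot (phi i) (phi i).
  by rewrite divr_gt0 // mulr_gt0.
case: (int_ge1 E1 q10) => [z11|h1].
  have [k Hk] := refl_ex j i; exists k; left.
  by rewrite Hk /reflv E1 z11 scale1r.
case: (int_ge1 E2 q20) => [z21|h2].
  have [k Hk] := refl_ex i j; exists k; right.
  by rewrite Hk /reflv (dotC (phi j)) E2 z21 scale1r.
exfalso; move: ij => /eqP; apply; apply: phi_inj; apply/eqP; rewrite -subr_eq0; apply/eqP.
apply: dot_eq0; apply/eqP; rewrite eq_le dot_ge0 andbT.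
rewrite dotBl !dotBr (dotC (phi j) (phi i)).
rewrite ler_pdivlMr // in h1; rewrite ler_pdivlMr // in h2.
lra.
Qed.

Lemma same_height_nonpos i j h : i != j -> pos_height phi D i h -> pos_height phi D j h ->
  dot (phi i) (phi j) <= 0.
Proof.
move=> ij Hi Hj; rewrite leNgt; apply/negP => p0.
have [k [Hk|Hk]] := key ij p0.
  exact: (diff_noroot Hi Hj Hk).
exact: (diff_noroot Hj Hi Hk).
Qed.


Lemma coef_exchange (k : nat) (t : 'I_k -> R) (Q : pred 'I_k) (f : 'I_k -> 'I_m -> nat) :
  \sum_(a | Q a) t a *: \sum_(i in D) (f a i)%:R *: phi i =
  \sum_(i in D) (\sum_(a | Q a) t a * (f a i)%:R) *: phi i.
Proof.
under eq_bigr do rewrite scaler_sumr.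
rewrite exchange_big /=; apply: eq_bigr => i _.
by rewrite scaler_suml; apply: eq_bigr => a _; rewrite scalerA.
Qed.

Lemma nonpos_all (k : nat) (x : 'I_k -> 'rV[R]_r) (f : 'I_k -> 'I_m -> nat) (h : nat) :
  (0 < h)%N -> (forall a, x a = \sum_(i in D) (f a i)%:R *: phi i) ->
  (forall a, (\sum_(i in D) f a i)%N = h) ->
  (forall a b, a != b -> dot (x a) (x b) <= 0) ->
  forall t : 'I_k -> R, \sum_a t a *: x a = 0 -> forall a, t a <= 0.
Proof.
move=> h0 Hx Hs Hd t S0.
pose P := fun a => 0 < t a.
have Hsplit : \sum_(a | P a) t a *: x a = \sum_(a | ~~ P a) (- t a) *: x a.
  move: S0; rewrite (bigID P) /= => /eqP; rewrite addr_eq0 => /eqP ->.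
  by rewrite -sumrN; apply: eq_bigr => a _; rewrite scaleNr.
have v0 : \sum_(a | P a) t a *: x a = 0.
  apply: dot_eq0; apply/eqP; rewrite eq_le dot_ge0 andbT.
  rewrite [X in dot _ X]Hsplit dot_suml; apply: sumr_le0 => a Pa.
  rewrite dot_sumr; apply: sumr_le0 => b nPb.
  rewrite dotZl dotZr; apply: mulr_ge0_le0; first exact: ltW.
  apply: mulr_ge0_le0; first by rewrite oppr_ge0 leNgt.
  apply: Hd; apply: contraNneq nPb => <-; exact: Pa.
move: v0; under eq_bigr do rewrite Hx.
rewrite coef_exchange => /indepD H.
have : \sum_(a | P a) t a * h%:R = 0.
  transitivity (\sum_(i in D) \sum_(a | P a) t a * (f a i)%:R).
    rewrite exchange_big /=; apply: eq_bigr => a _.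
    by rewrite -(Hs a) natr_sum mulr_sumr.
  by apply: big1 => i iD; apply: H.
move/psumr_eq0P => H2.
have H3 : forall a, P a -> t a * h%:R = 0.
  by apply: H2 => b Pb; apply: mulr_ge0; [exact: ltW | exact: ler0n].
move=> a; rewrite leNgt; apply/negP => Pa.
move: (H3 a Pa) => /eqP; rewrite mulf_eq0 pnatr_eq0 eqn0Ngt h0 orbF.
by rewrite gt_eqF.
Qed.

Lemma card_height h : (#|[set j | `[< pos_height phi D j h >]]| <= #|D|)%N.
Proof.
case: h => [|h].
  suff -> : [set j | `[< pos_height phi D j 0 >]] = set0 by rewrite cards0.
  apply/setP => j; rewrite !inE; apply/negbTE/negP => /asboolP; exact: pos_height0.
set H := [set j | _].
pose k := #|H|.
pose ev := fun a : 'I_k => (@enum_val _ (mem H) a).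
have Hc : forall a : 'I_k, exists c : 'I_m -> nat,
    phi (ev a) = \sum_(i in D) (c i)%:R *: phi i /\ (\sum_(i in D) c i)%N = h.+1.
  move=> a; have := enum_valP a; rewrite inE => /asboolP; exact.
have [f Hf] := choice Hc.
pose M : 'M[R]_(k, #|D|) := \matrix_(a < k, b < #|D|) (f a (enum_val b))%:R.
suff : row_free M by rewrite /row_free => /eqP E; rewrite -[#|H|]/k -E; exact: rank_leq_col.
apply: inj_row_free => v vM0.
have S0 : \sum_a v 0 a *: phi (ev a) = 0.
  under eq_bigr do rewrite (Hf _).1.
  rewrite coef_exchange; apply: big1 => i iD.
  have := congr1 (fun A : 'M[R]_(1, #|D|) => A 0 (enum_rank_in iD i)) vM0.
  rewrite !mxE /= => E0.
  suff -> : \sum_a v 0 a * (f a i)%:R = 0 by rewrite scale0r.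
  by rewrite -[RHS]E0; apply: eq_bigr => a _; rewrite mxE enum_rankK_in.
have Hd : forall a b, a != b -> dot (phi (ev a)) (phi (ev b)) <= 0.
  move=> a b ab.
  have eab : ev a != ev b by apply: contra ab => /eqP /enum_val_inj ->.
  have := enum_valP a; have := enum_valP b; rewrite !inE => /asboolP Hb /asboolP Ha.
  exact: same_height_nonpos eab Ha Hb.
have N1 := @nonpos_all k (fun a => phi (ev a)) f h.+1 isT (fun a => (Hf a).1) (fun a => (Hf a).2) Hd _ S0.
have S1 : \sum_a (- v 0 a) *: phi (ev a) = 0.
  by under eq_bigr do rewrite scaleNr; rewrite sumrN S0 oppr0.
have N2 := @nonpos_all k (fun a => phi (ev a)) f h.+1 isT (fun a => (Hf a).1) (fun a => (Hf a).2) Hd _ S1.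
apply/rowP => a; rewrite mxE; have := N1 a; have := N2 a; lra.
Qed.


Lemma card_pos_dot (u : 'rV[R]_r) (G : {set 'I_m}) : u != 0 ->
  (forall g, g \in G -> dot u u <= 2 * dot u (phi g) /\ dot (phi g) (phi g) <= 2 * dot u (phi g)) ->
  (forall g g', g \in G -> g' \in G -> g != g' -> dot (phi g) (phi g') <= 0) ->
  (#|G| <= 4)%N.
Proof.
move=> u0 Hg Hp.
pose k := #|G|.
pose x := fun a : 'I_k => phi (@enum_val _ (mem G) a).
pose w := \sum_a x a.
pose S := \sum_a dot (x a) (x a).
pose P := dot u w.
have uu0 := dot_gt0 u0.
have hw : dot w w <= S.
  rewrite /w dot_suml; apply: ler_sum => a _; rewrite dot_sumr (bigD1 a) //=.
  rewrite gerDl; apply: sumr_le0 => b ba; apply: Hp; try exact: enum_valP.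
  by apply: contra ba => /eqP /enum_val_inj ->.
have hCS : P ^+ 2 <= dot u u * dot w w.
  have := dot_ge0 (dot u u *: w - P *: u).
  rewrite !dotBl !dotBr !dotZl !dotZr (dotC w u) -/P => H.
  nra.
have hS : S <= 2 * P.
  rewrite /P /w dot_sumr mulr_sumr; apply: ler_sum => a _.
  exact: (Hg _ (enum_valP a)).2.
have hk : k%:R * dot u u <= 2 * P.
  rewrite /P /w dot_sumr mulr_sumr.
  apply: le_trans (ler_sum _ (fun a _ => (Hg _ (enum_valP a)).1)).
  by rewrite sumr_const card_ord mulr_natl.
case: (posnP k) => [kk|kp]; first by rewrite -[#|G|]/k kk.
have kR : 1 <= k%:R :> R by rewrite ler1n.
have P0 : 0 < P by nra.
have h1 : P ^+ 2 <= dot u u * (2 * P).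
  apply: le_trans hCS _; apply: ler_wpM2l; [exact: ltW | exact: le_trans hw hS].
have h2 : P <= 2 * dot u u by nra.
have : k%:R <= 4 :> R by nra.
by rewrite (ler_nat R k 4) -[#|G|]/k.
Qed.

Lemma reflv_inv (a b : 'rV[R]_r) : a != 0 -> reflv a (reflv a b) = b.
Proof.
move=> a0; have aa := dot_gt0 a0.
rewrite /reflv dotBl dotZl.
set c := 2 * dot b a / dot a a.
have -> : 2 * (dot b a - c * dot a a) / dot a a = - c.
  rewrite /c; field; exact: lt0r_neq0.
by rewrite scaleNr opprK subrK.
Qed.

Lemma reflvN (a b : 'rV[R]_r) : reflv a (- b) = - reflv a b.
Proof. by rewrite /reflv dotNl mulrN mulNr scaleNr opprK opprB addrC. Qed.

Lemma reflv_self (a : 'rV[R]_r) : a != 0 -> reflv a a = - a.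
Proof.
move=> a0; have aa := dot_gt0 a0.
rewrite /reflv mulfK ?lt0r_neq0 //.
by rewrite scaler_nat mulr2n opprD addrA subrr add0r.
Qed.

Lemma reflv_orth (a b : 'rV[R]_r) : dot b a = 0 -> reflv a b = b.
Proof. by move=> h; rewrite /reflv h mulr0 mul0r scale0r subr0. Qed.

Lemma refl_perm i : exists s : {perm 'I_m},
  s \in weyl phi /\ forall j, phi (s j) = reflv (phi i) (phi j).
Proof.
have [f Hf] := choice (refl_ex i).
have finj : injective f.
  move=> j1 j2 E; apply: phi_inj.
  rewrite -(reflv_inv (phi j1) (phi_neq0 i)) -(reflv_inv (phi j2) (phi_neq0 i)).
  by rewrite -!Hf E.
exists (perm finj); split; last by move=> j; rewrite permE Hf.
apply: mem_gen; rewrite inE; apply/existsP; exists i; apply/forallP => j.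
by rewrite permE Hf.
Qed.

Lemma weyl_neg w : w \in weyl phi -> forall j k, phi k = - phi j -> phi (w k) = - phi (w j).
Proof.
case/gen_prodgP => n [c Hc ->] {w}.
elim: n c Hc => [|n IH] c Hc j k E.
  by rewrite !big_ord0 !perm1.
rewrite !big_ord_recr /= !permM.
have := Hc ord_max; rewrite inE => /existsP [i /forallP H].
rewrite (eqP (H _)) (eqP (H _)).
have := IH (fun l => c (widen_ord (leqnSn n) l)) (fun l => Hc _) j k E.
move=> /= ->; exact: reflvN.
Qed.

Lemma sum_pos (c : 'I_m -> nat) : \sum_(i in D) (c i)%:R *: phi i != 0 ->
  (0 < \sum_(i in D) c i)%N.
Proof.
rewrite lt0n; apply: contra => /eqP H; apply/eqP; apply: sumD0.
by rewrite -natr_sum H.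
Qed.

Lemma neg_exclusive j k : phi k = - phi j -> is_neg phi D k <-> ~ is_neg phi D j.
Proof.
move=> E; split.
  case=> ck [Hk Sk] [cj [Hj Sj]].
  have : \sum_(i in D) (- (ck i)%:R) *: phi i = \sum_(i in D) (cj i)%:R *: phi i.
    transitivity (phi k); last by rewrite E Hj opprK.
    by rewrite Hk -sumrN; apply: eq_bigr => i _; rewrite scaleNr.
  move/coefs_eq => H.
  have : (\sum_(i in D) cj i)%N = 0%N.
    apply: big1 => i iD; have := H i iD => /eqP; rewrite eq_sym -subr_eq0 opprK.
    by rewrite -natrD pnatr_eq0 addn_eq0 => /andP [/eqP].
  by move=> h; rewrite h in Sj.
move=> nj; case: hB => _ /(_ j) [c [Hc|Hc]].
  exists c; split; first by rewrite E Hc.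
  by apply: sum_pos; rewrite -Hc phi_neq0.
exfalso; apply: nj; exists c; split => //.
by apply: sum_pos; rewrite -oppr_eq0 -Hc phi_neq0.
Qed.


Lemma X_flip (s w : {perm 'I_m}) b : w \in weyl phi -> phi (s b) = - phi b ->
  X phi D b (s * w) = ~~ X phi D b w.
Proof.
move=> Ww E; rewrite /X permM.
have E2 := weyl_neg Ww E.
have [H|H] := asboolP (is_neg phi D (w b)).
  by apply: asboolF; apply/(neg_exclusive E2).
apply: asboolT; apply/(neg_exclusive E2); exact: H.
Qed.

Lemma X_fix (s w : {perm 'I_m}) g : s g = g -> X phi D g (s * w) = X phi D g w.
Proof. by move=> E; rewrite /X permM E. Qed.

Lemma card_shift (s : {perm 'I_m}) (Q : pred {perm 'I_m}) : s \in weyl phi ->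
  #|[set w in weyl phi | Q (s * w)%g]| = #|[set w in weyl phi | Q w]|.
Proof.
move=> Ws; rewrite -!sum1_card [RHS](reindex_inj (mulgI s)).
by apply: eq_bigl => w; rewrite !inE groupMl.
Qed.

Lemma orth_indep b g : dot (phi b) (phi g) = 0 -> indepX phi D b g.
Proof.
move=> bg.
have [sb [Wsb Hsb]] := refl_perm b.
have [sg [Wsg Hsg]] := refl_perm g.
have sbb : phi (sb b) = - phi b by rewrite Hsb reflv_self // phi_neq0.
have sgg : phi (sg g) = - phi g by rewrite Hsg reflv_self // phi_neq0.
have sbg : sb g = g by apply: phi_inj; rewrite Hsb reflv_orth // dotC.
have sgb : sg b = b by apply: phi_inj; rewrite Hsg reflv_orth.
pose W := weyl phi.
pose N x y := #|[set w in W | (X phi D b w == x) && (X phi D g w == y)]|.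
have Nx : forall x y, N x y = N (~~ x) y.
  move=> x y; rewrite /N -(card_shift _ Wsb); apply: eq_card => w; rewrite !inE.
  case Ww: (w \in W) => //=; rewrite (X_flip Ww sbb) (X_fix w sbg).
  by case: x; case: (X phi D b w).
have Ny : forall x y, N x y = N x (~~ y).
  move=> x y; rewrite /N -(card_shift _ Wsg); apply: eq_card => w; rewrite !inE.
  case Ww: (w \in W) => //=; rewrite (X_flip Ww sgg) (X_fix w sgb).
  by case: y; case: (X phi D g w).
pose q := N true true.
have Nq : forall x y, N x y = q.
  move=> [] [] //; rewrite ?(Ny true false) ?(Nx false true) //.
  by rewrite (Nx false false) (Ny true false).
have Mb : forall x, #|[set w in W | X phi D b w == x]| = (q + q)%N.
  move=> x; transitivity (N x true + N x false)%N; last by rewrite !Nq.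
  rewrite -(cardsID [set w | X phi D g w]).
  congr (_ + _)%N; apply: eq_card => w; rewrite !inE;
  by case: x; case: (w \in W); case: (X phi D b w); case: (X phi D g w).
have Mg : forall y, #|[set w in W | X phi D g w == y]| = (q + q)%N.
  move=> y; transitivity (N true y + N false y)%N; last by rewrite !Nq.
  rewrite -(cardsID [set w | X phi D b w]).
  congr (_ + _)%N; apply: eq_card => w; rewrite !inE;
  by case: y; case: (w \in W); case: (X phi D b w); case: (X phi D g w).
have MW : #|W| = (q + q + (q + q))%N.
  transitivity (#|[set w in W | X phi D b w == true]| + #|[set w in W | X phi D b w == false]|)%N;
    last by rewrite !Mb.
  rewrite -(cardsID [set w | X phi D b w]).
  congr (_ + _)%N; apply: eq_card => w; rewrite !inE;
  by case: (w \in W); case: (X phi D b w).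
apply/forallP => x; apply/forallP => y; apply/eqP.
rewrite -/W Mb Mg MW.
have := Nq x y; rewrite /N => ->.
lia.
Qed.


Lemma int_ge1' (z : int) (q : R) : q = z%:~R -> 0 < q -> 1 <= q.
Proof.
move=> E q0; case: (int_ge1 E q0) => [z1|]; last by move=> h; lra.
by rewrite E z1.
Qed.

Lemma int_bound i j (s : R) : s = 1 \/ s = -1 -> 0 < s * dot (phi i) (phi j) ->
  dot (phi i) (phi i) <= 2 * (s * dot (phi i) (phi j)) /\
  dot (phi j) (phi j) <= 2 * (s * dot (phi i) (phi j)).
Proof.
have ii := dot_gt0 (phi_neq0 i); have jj := dot_gt0 (phi_neq0 j).
have [z1 E1] := integ i j; have [z2 E2] := integ j i.
rewrite (dotC (phi j)) in E1.
move=> Hs p0; split.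
- have : 0 < s * (2 * dot (phi i) (phi j) / dot (phi i) (phi i)).
    rewrite !mulrA (mulrC s 2) -(mulrA 2); apply: divr_gt0 => //; exact: mulr_gt0.
  case: Hs => -> H.
    move: H; rewrite mul1r => H.
    have := int_ge1' E1 H; rewrite ler_pdivlMr //; lra.
  have E1' : - (2 * dot (phi i) (phi j) / dot (phi i) (phi i)) = (- z1)%:~R by rewrite E1 mulrNz.
  move: H; rewrite mulN1r => H.
  have := int_ge1' E1' H; rewrite -mulNr ler_pdivlMr //; lra.
- have : 0 < s * (2 * dot (phi i) (phi j) / dot (phi j) (phi j)).
    rewrite !mulrA (mulrC s 2) -(mulrA 2); apply: divr_gt0 => //; exact: mulr_gt0.
  case: Hs => -> H.
    move: H; rewrite mul1r => H.
    have := int_ge1' E2 H; rewrite ler_pdivlMr //; lra.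
  have E2' : - (2 * dot (phi i) (phi j) / dot (phi j) (phi j)) = (- z2)%:~R by rewrite E2 mulrNz.
  move: H; rewrite mulN1r => H.
  have := int_ge1' E2' H; rewrite -mulNr ler_pdivlMr //; lra.
Qed.

Lemma card_dir (b : 'I_m) h (s : R) : s = 1 \/ s = -1 ->
  (#|[set g | `[< pos_height phi D g h >] && (0 < s * dot (phi b) (phi g))%R]| <= 4)%N.
Proof.
move=> Hs.
have s2 : s * s = 1 by case: Hs => ->; lra.
apply: (@card_pos_dot (s *: phi b)).
- rewrite scaler_eq0 negb_or phi_neq0 andbT; case: Hs => ->; lra.
- move=> g; rewrite inE => /andP [_ H].
  rewrite !dotZl !dotZr mulrA s2 mul1r.
  exact: int_bound.
- move=> g g'; rewrite !inE => /andP [/asboolP Hg _] /andP [/asboolP Hg' _] gg'.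
  exact: same_height_nonpos Hg Hg'.
Qed.

End Roots.

Lemma card_bigcup_ord (T : finType) (n : nat) (A : nat -> {set T}) :
  (#|\bigcup_(h < n) A h| <= \sum_(h < n) #|A h|)%N.
Proof.
elim: n => [|n IH]; first by rewrite big_ord0 cards0.
rewrite !big_ord_recr /= cardsU.
by apply: leq_trans (leq_subr _ _) (leq_add IH (leqnn _)).
Qed.

Lemma card_pos_le (R : realType) m r (phi : 'I_m -> 'rV[R]_r) D :
  is_root_system phi -> is_base phi D -> forall d,
  (#|pos_le phi D d| <= #|D| * d)%N.
Proof.
move=> hR hB d.
have sub : pos_le phi D d \subset \bigcup_(h < d) [set j | `[< pos_height phi D j h.+1 >]].
  apply/subsetP => j; rewrite inE => /asboolP [h [hle hp]].
  case: h hle hp => [|h] hle hp; first by case: (pos_height0 hR hB hp).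
  apply/bigcupP; exists (Ordinal hle) => //; rewrite inE; exact/asboolP.
apply: leq_trans (subset_leq_card sub) _.
apply: leq_trans (card_bigcup_ord d (fun k => [set j | `[< pos_height phi D j k.+1 >]])) _.
apply: (@leq_trans (\sum_(h < d) #|D|)).
  by apply: leq_sum => h _; exact: card_height.
by rewrite sum_nat_const card_ord mulnC.
Qed.

Lemma dep_bound (R : realType) m r (phi : 'I_m -> 'rV[R]_r) D :
  is_root_system phi -> is_base phi D -> forall d b,
  (dep_degree phi D d b <= 8 * d)%N.
Proof.
move=> hR hB d b.
pose G (s : R) h := [set g | `[< pos_height phi D g h >] && (0 < s * dotv (phi b) (phi g))%R].
have sub : [set g in pos_le phi D d | (g != b) && ~~ indepX phi D b g] \subset
    \bigcup_(h < d) (G 1%R h.+1 :|: G (-1)%R h.+1).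
  apply/subsetP => g; rewrite !inE => /andP [/asboolP [h [hle hp]] /andP [_ ni]].
  case: h hle hp => [|h] hle hp; first by case: (pos_height0 hR hB hp).
  apply/bigcupP; exists (Ordinal hle) => //=; rewrite !inE.
  have nz : dotv (phi b) (phi g) != 0.
    by apply: contra ni => /eqP; exact: orth_indep.
  have [H|H] := ltrP 0 (dotv (phi b) (phi g)).
    by apply/orP; left; apply/andP; split; [exact/asboolP | rewrite mul1r].
  apply/orP; right; apply/andP; split; first exact/asboolP.
  by rewrite mulN1r oppr_gt0 lt_neqAle nz H.
apply: leq_trans (subset_leq_card sub) _.
apply: leq_trans (card_bigcup_ord d (fun k => G 1%R k.+1 :|: G (-1)%R k.+1)) _.
have : forall h : 'I_d, (#|G 1%R h.+1 :|: G (-1)%R h.+1| <= 8)%N.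
  move=> h; rewrite cardsU; apply: leq_trans (leq_subr _ _) _.
  have := card_dir hR hB b h.+1 (or_introl erefl).
  have := card_dir hR hB b h.+1 (or_intror erefl).
  rewrite /G; lia.
move=> H8; apply: (@leq_trans (\sum_(h < d) 8)).
  by apply: leq_sum => h _; exact: H8.
by rewrite sum_nat_const card_ord mulnC.
Qed.

Theorem proposition4p7 (R : realType) (m r : nat -> nat)
    (phi : forall n, 'I_(m n) -> 'rV[R]_(r n)) (D : forall n, {set 'I_(m n)})
    (d : nat -> nat) :
  (forall n, is_root_system (phi n)) ->
  (forall n, is_base (phi n) (D n)) ->
  (forall n, (0 < d n)%N) ->
  (forall K : nat, exists N : nat, forall n, (N <= n)%N ->
       (K <= #|pos_le (phi n) (D n) (d n)|)%N) ->
  (forall n, exists j, pos_height (phi n) (D n) j (d n)) ->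
  exists (C C' : R), 0 < C /\ 0 < C' /\
    exists N : nat, forall n, (N <= n)%N ->
      (#|pos_le (phi n) (D n) (d n)|%:R <= C * #|D n|%:R * (d n)%:R) /\
      ((max_dep_degree (phi n) (D n) (d n))%:R <= C' * (d n)%:R).
Proof.
move=> hR hB _ _ _.
exists 1, 8; split; first lra; split; first lra.
exists 0%N => n _; split.
  by rewrite mul1r -natrM ler_nat; exact: card_pos_le.
rewrite -[8]/(8%:R) -natrM ler_nat.
by apply/bigmax_leqP => b _; exact: dep_bound.
Qed.
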